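(* Under the setting in the context, assume $\sigma_A>0$ and $S^2\ge M_iR_i/p_i^2$ for all $i$. Choose, for all $t$, $\alpha_t=\beta_t=\rho$ with $\rho=\sqrt{\sigma_A}\,S^{-1}$, and $A_t=\sigma_A^{-1}B_t=(1-\rho)^{-t}$ (so $A_0=1$, $B_0=\sigma_A$). Then the condition $1-\frac{\alpha_tR_i}{p_i}\ge0$ holds for all $i,t$, and the generalized APCG iterates satisfy $$\sigma_A\,\mathbb{E}\big[\|v_t-\theta^\star\|^2_{A^\dagger A}\big]+2\big[\mathbb{E}[F(x_t)]-F(\theta^\star)\big]\le C_0(1-\rho)^t,$$ with $C_0=B_0\|v_0-\theta^\star\|^2+2A_0[F(x_0)-F(\theta^\star)]$.
   Context: Setting. Minimize $F(x)=f_A(x)+\sum_{i=1}^d\psi_i(x^{(i)})$ over $\mathbb{R}^d$; $\theta^\star$ a minimizer. $A$ is a matrix with $d$ columns, $A^\dagger$ its pseudo-inverse, $\|u\|^2_{A^\dagger A}=u^TA^\dagger Au$, $e_i$ unit vectors, $x^{(i)}=e_i^Tx$, $R_i=e_i^TA^\dagger Ae_i$. Each $\psi_i$ is convex; $f_A$ is differentiable with $f_A(x)-f_A(y)\ge\nabla f_A(y)^TA^\dagger A(x-y)+\frac{\sigma_A}{2}(x-y)^TA^\dagger A(x-y)$ for all $x,y$; $\nabla_if_A=e_ie_i^T\nabla f_A$; $f_A$ is $M_i$-smooth in direction $i$; for every $i$ either $R_i=1$ or $\psi_i=0$; sampling probabilities $p_i>0$ sum to $1$. Generalized APCG with sequences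 $(\alpha_t,\beta_t,A_t,B_t)$, $a_{t+1}=A_{t+1}-A_t$, $\eta_{i,t}=\frac{a_{t+1}}{B_{t+1}p_i}$: $x_0=v_0=0$; for each $t$: $y_t=\frac{(1-\alpha_t)x_t+\alpha_t(1-\beta_t)v_t}{1-\alpha_t\beta_t}$; sample $i$ w.p. $p_i$ independently; $z_{t+1}=v_{t+1}=(1-\beta_t)v_t+\beta_ty_t-\eta_{i,t}\nabla_if_A(y_t)$; replace $v_{t+1}^{(i)}={\rm prox}_{\eta_{i,t}\psi_i}(z_{t+1}^{(i)})$ where ${\rm prox}_{\eta\psi}(x)=\arg\min_v\frac{1}{2\eta}\|v-x\|^2+\psi(v)$; $x_{t+1}=y_t+\frac{\alpha_tR_i}{p_i}(v_{t+1}-(1-\beta_t)v_t-\beta_ty_t)$. *)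

(* Defs.v *)
From HB Require Import structures.
From mathcomp Require Import all_boot all_order all_algebra.
From mathcomp Require Import all_classical all_reals all_analysis.
Set Implicit Arguments. Unset Strict Implicit. Unset Printing Implicit Defensive.
Import Order.TTheory GRing.Theory Num.Theory.
Import numFieldNormedType.Exports.
Local Open Scope ring_scope.

Definition is_pinv (R : realType) (m d : nat) (A : 'M[R]_(m, d)) (X : 'M[R]_(d, m)) : Prop :=
  [/\ A *m X *m A = A, X *m A *m X = X, (A *m X)^T = A *m X & (X *m A)^T = X *m A].

Definition evec (R : realType) (d : nat) (i : 'I_d) : 'cV[R]_d := delta_mx i 0.

Definition sqnormP (R : realType) (d : nat) (P : 'M[R]_d) (u : 'cV[R]_d) : R :=
  (u^T *m P *m u) 0 0.

Definition sqnorm (R : realType) (d : nat) (u : 'cV[R]_d) : R := (u^T *m u) 0 0.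

Definition Rdiag (R : realType) (d : nat) (P : 'M[R]_d) (i : 'I_d) : R :=
  ((evec R i)^T *m P *m evec R i) 0 0.

Definition coord_grad (R : realType) (d : nat) (g : 'cV[R]_d -> 'cV[R]_d)
  (i : 'I_d) (y : 'cV[R]_d) : 'cV[R]_d :=
  evec R i *m (evec R i)^T *m g y.

Definition convex_fun (R : realType) (psi : R -> R) : Prop :=
  forall (a b l : R), 0 <= l <= 1 ->
    psi (l * a + (1 - l) * b) <= l * psi a + (1 - l) * psi b.

Definition is_prox (R : realType) (eta : R) (psi : R -> R) (z v : R) : Prop :=
  forall w : R, (v - z) ^+ 2 / (2 * eta) + psi v <= (w - z) ^+ 2 / (2 * eta) + psi w.

Definition Fobj (R : realType) (d : nat) (f : 'cV[R]_d -> R) (psi : 'I_d -> R -> R)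
  (x : 'cV[R]_d) : R :=
  f x + \sum_(i < d) psi i (x i 0).

(* The iterates are indexed by the history of sampled
   coordinates h = [:: i_0; ...; i_{t-1}] (t = size h); appending the index
   i_t sampled at step t gives the history of length t+1. *)
Definition apcg_iterates (R : realType) (d : nat)
  (alpha beta As Bs : nat -> R) (p : 'I_d -> R) (P : 'M[R]_d)
  (g : 'cV[R]_d -> 'cV[R]_d) (psi : 'I_d -> R -> R)
  (x v : seq 'I_d -> 'cV[R]_d) : Prop :=
  x [::] = 0 /\ v [::] = 0 /\
  forall (h : seq 'I_d) (i : 'I_d),
    let t := size h in
    let y := (1 - alpha t * beta t)^-1 *:
               ((1 - alpha t) *: x h + (alpha t * (1 - beta t)) *: v h) in
    let eta := (As t.+1 - As t) / (Bs t.+1 * p i) in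
    let z := (1 - beta t) *: v h + beta t *: y - eta *: coord_grad g i y in
    [/\ is_prox eta (psi i) (z i 0) (v (rcons h i) i 0),
        (forall j : 'I_d, j != i -> v (rcons h i) j 0 = z j 0) &
        x (rcons h i) = y + (alpha t * Rdiag P i / p i) *:
                            (v (rcons h i) - (1 - beta t) *: v h - beta t *: y)].

(* Expectation after t steps of a quantity X depending on the history, the
   indices being i.i.d. with P(i) = p i. *)
Definition Exp (R : realType) (d : nat) (p : 'I_d -> R) (t : nat)
  (X : seq 'I_d -> R) : R :=
  \sum_(h : t.-tuple 'I_d) (\prod_(i <- h) p i) * X h.

(* Main.v *)
Require Import Defs.
From HB Require Import structures.
From mathcomp Require Import all_boot all_order all_algebra.
From mathcomp Require Import all_classical all_reals all_analysis.
From mathcomp Require Import ring lra.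
Import Order.TTheory GRing.Theory Num.Theory.
Import numFieldNormedType.Exports.
Set Implicit Arguments. Unset Strict Implicit. Unset Printing Implicit Defensive.
Local Open Scope ring_scope.

Lemma Exp_cons (R : realType) (d : nat) (p : 'I_d -> R) (t : nat) (X : seq 'I_d -> R) :
  Exp p t.+1 X = \sum_(i < d) p i * Exp p t (fun h => X (i :: h)).
Proof.
rewrite /Exp.
have -> : \sum_(i < d) p i * (\sum_(h : t.-tuple 'I_d) (\prod_(j <- h) p j) * X (i :: h))
   = \sum_(q : 'I_d * t.-tuple 'I_d) (\prod_(j <- [tuple of q.1 :: q.2]) p j) * X (q.1 :: q.2).
  rewrite -(pair_bigA _ (fun i (h : t.-tuple 'I_d) => (\prod_(j <- [tuple of i :: h]) p j) * X (i :: h))).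
  apply: eq_bigr => i _; rewrite big_distrr /=; apply: eq_bigr => h _.
  by rewrite big_cons mulrA.
rewrite (reindex (fun q : 'I_d * t.-tuple 'I_d => [tuple of q.1 :: q.2])) //=.
exists (fun s : t.+1.-tuple 'I_d => (thead s, [tuple of behead s])).
  by move=> [i h] _ /=; rewrite theadE; congr pair; apply: val_inj.
by move=> s _ /=; rewrite [RHS]tuple_eta.
Qed.

Lemma Exp_ext (R : realType) (d : nat) (p : 'I_d -> R) (t : nat) (X Y : seq 'I_d -> R) :
  (forall h, X h = Y h) -> Exp p t X = Exp p t Y.
Proof. by move=> e; apply: eq_bigr => h _; rewrite e. Qed.

Lemma Exp_lin (R : realType) (d : nat) (p : 'I_d -> R) (t : nat) (X Y : seq 'I_d -> R) a b :
  Exp p t (fun h => a * X h + b * Y h) = a * Exp p t X + b * Exp p t Y.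
Proof.
rewrite /Exp !big_distrr -big_split /=; apply: eq_bigr => h _; ring.
Qed.

Lemma Exp_le (R : realType) (d : nat) (p : 'I_d -> R) (t : nat) (X Y : seq 'I_d -> R) :
  (forall i, 0 <= p i) -> (forall h, X h <= Y h) -> Exp p t X <= Exp p t Y.
Proof.
move=> p0 le; apply: ler_sum => h _; apply: ler_wpM2l; last exact: le.
by apply: prodr_ge0 => i _.
Qed.

Lemma Exp_cst (R : realType) (d : nat) (p : 'I_d -> R) (t : nat) c :
  \sum_(i < d) p i = 1 -> Exp p t (fun _ => c) = c.
Proof.
move=> s1; elim: t => [|t IH].
  rewrite /Exp (big_pred1 [tuple]); last by move=> h; apply/esym/eqP/tuple0.
  by rewrite big_nil mul1r.
rewrite Exp_cons; under eq_bigr do rewrite IH.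
by rewrite -big_distrl /= s1 mul1r.
Qed.
Lemma evec_row (R : realType) (d n : nat) (i : 'I_d) (M : 'M[R]_(d, n)) k :
  ((evec R i)^T *m M) 0 k = M i k.
Proof. by rewrite /evec trmx_delta -rowE mxE. Qed.

Lemma evec_col (R : realType) (d n : nat) (i : 'I_d) (M : 'M[R]_(n, d)) k :
  (M *m evec R i) k 0 = M k i.
Proof. by rewrite /evec -colE mxE. Qed.

Lemma evec_entry (R : realType) (d : nat) (i j : 'I_d) :
  evec R i j 0 = (j == i)%:R.
Proof. by rewrite /evec mxE andbT. Qed.

Lemma Rdiag_entry (R : realType) (d : nat) (P : 'M[R]_d) i : Rdiag P i = P i i.
Proof. by rewrite /Rdiag -mulmxA evec_row evec_col. Qed.

Lemma coord_grad_entry (R : realType) (d : nat) (g : 'cV[R]_d -> 'cV[R]_d) i y j :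
  coord_grad g i y j 0 = (j == i)%:R * g y i 0.
Proof.
rewrite /coord_grad -mulmxA [LHS]mxE big_ord1 evec_entry.
by rewrite (@evec_row R d 1 i (g y) 0).
Qed.

Lemma mulmx_entry (R : realType) (d : nat) (P : 'M[R]_d) (u : 'cV[R]_d) k :
  (P *m u) k 0 = \sum_l P k l * u l 0.
Proof. by rewrite mxE. Qed.

Definition sqP (R : realType) (d : nat) (P : 'M[R]_d) (u : 'cV[R]_d) : R :=
  \sum_k ((P *m u) k 0) ^+ 2.

Lemma sqnormP_sq (R : realType) (d : nat) (P : 'M[R]_d) (u : 'cV[R]_d) :
  P^T = P -> P *m P = P -> sqnormP P u = sqP P u.
Proof.
move=> PT PP; rewrite /sqnormP /sqP.
have -> : u^T *m P *m u = (P *m u)^T *m (P *m u).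
  by rewrite trmx_mul PT mulmxA -(mulmxA u^T P P) PP.
rewrite mxE.
by apply: eq_bigr => k _; rewrite mxE expr2.
Qed.

Lemma sqP_ge0 (R : realType) (d : nat) (P : 'M[R]_d) (u : 'cV[R]_d) : 0 <= sqP P u.
Proof. by apply: sumr_ge0 => k _; apply: sqr_ge0. Qed.

Lemma Pmx_lin (R : realType) (d : nat) (P : 'M[R]_d) (a b : 'cV[R]_d) (s t : R) k :
  (P *m (s *: a + t *: b)) k 0 = s * (P *m a) k 0 + t * (P *m b) k 0.
Proof. by rewrite mulmxDr -!scalemxAr !mxE. Qed.

Lemma sqP_convex (R : realType) (d : nat) (P : 'M[R]_d) (a b : 'cV[R]_d) (r : R) :
  0 <= r <= 1 -> sqP P ((1 - r) *: a + r *: b) <= (1 - r) * sqP P a + r * sqP P b.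
Proof.
move=> /andP [r0 r1]; rewrite /sqP !big_distrr -big_split /=.
apply: ler_sum => k _; rewrite Pmx_lin.
set A := (P *m a) k 0; set B := (P *m b) k 0.
have : 0 <= r * (1 - r) * (A - B) ^+ 2.
  by apply: mulr_ge0; [apply: mulr_ge0; lra | apply: sqr_ge0].
move=> h; nra.
Qed.

Lemma sqP_step (R : realType) (d : nat) (P : 'M[R]_d) (a : 'cV[R]_d) (s : R) i :
  P^T = P -> P *m P = P ->
  sqP P (a + s *: evec R i) = sqP P a + 2 * s * (P *m a) i 0 + s ^+ 2 * P i i.
Proof.
move=> PT PP.
have e1 : \sum_k (P *m a) k 0 * P k i = (P *m a) i 0.
  have -> : (P *m a) i 0 = \sum_k P i k * (P *m a) k 0.
    by rewrite -mulmx_entry mulmxA PP.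
  apply: eq_bigr => k _.
  have := congr1 (fun M : 'M[R]_d => M k i) PT; rewrite mxE => ->; ring.
have e2 : \sum_k P k i ^+ 2 = P i i.
  have := congr1 (fun M : 'M[R]_d => M i i) PP; rewrite mxE => <-.
  apply: eq_bigr => k _.
  have := congr1 (fun M : 'M[R]_d => M k i) PT; rewrite mxE => <-; ring.
rewrite /sqP -e1 -e2 !big_distrr /= -!big_split /=; apply: eq_bigr => k _.
have -> : (P *m (a + s *: evec R i)) k 0 = (P *m a) k 0 + s * P k i.
  by rewrite mulmxDr -scalemxAr -(evec_col i P k) !mxE.
ring.
Qed.

Lemma Lform (R : realType) (d : nat) (P : 'M[R]_d) (g u : 'cV[R]_d) :
  (g^T *m P *m u) 0 0 = \sum_k g k 0 * (P *m u) k 0.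
Proof. by rewrite -mulmxA mxE; apply: eq_bigr => k _; rewrite mxE. Qed.

Lemma Lin3 (R : realType) (d : nat) (G : 'rV[R]_d) (a b c : 'cV[R]_d) (s1 s2 s3 : R) :
  (G *m (s1 *: a + s2 *: b + s3 *: c)) 0 0
  = s1 * (G *m a) 0 0 + s2 * (G *m b) 0 0 + s3 * (G *m c) 0 0.
Proof. by rewrite !mulmxDr -!scalemxAr !mxE. Qed.

Lemma sqnorm_ge_sqnormP (R : realType) (d : nat) (P : 'M[R]_d) (u : 'cV[R]_d) :
  P^T = P -> P *m P = P -> sqnormP P u <= sqnorm u.
Proof.
move=> PT PP.
have QT : (1%:M - P)^T = 1%:M - P by rewrite linearB /= trmx1 PT.
have QQ : (1%:M - P) *m (1%:M - P) = 1%:M - P.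
  by rewrite mulmxBl mul1mx mulmxBr mulmx1 PP subrr subr0.
have E : u^T *m (1%:M - P) *m u = u^T *m u - u^T *m P *m u.
  by rewrite mulmxBr mulmx1 mulmxBl.
have := sqP_ge0 (1%:M - P) u; rewrite -sqnormP_sq // /sqnormP E.
rewrite /sqnorm => h.
have e : (u^T *m u - u^T *m P *m u) 0 0 = (u^T *m u) 0 0 - (u^T *m P *m u) 0 0.
  by rewrite [LHS]mxE [X in _ + X]mxE.
by rewrite e subr_ge0 in h.
Qed.

Lemma Pii_bounds (R : realType) (d : nat) (P : 'M[R]_d) i :
  P^T = P -> P *m P = P -> 0 <= P i i <= 1.
Proof.
move=> PT PP.
have e2 : \sum_k P k i ^+ 2 = P i i.
  have := congr1 (fun M : 'M[R]_d => M i i) PP; rewrite mxE => <-.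
  apply: eq_bigr => k _.
  have := congr1 (fun M : 'M[R]_d => M k i) PT; rewrite mxE => <-; ring.
have g0 : 0 <= P i i by rewrite -e2; apply: sumr_ge0 => k _; apply: sqr_ge0.
have : P i i ^+ 2 <= P i i.
  rewrite -{2}e2 (bigD1 i) //= lerDl; apply: sumr_ge0 => k _; apply: sqr_ge0.
move=> h; apply/andP; split => //; nra.
Qed.

Lemma Pii_one (R : realType) (d : nat) (P : 'M[R]_d) i (u : 'cV[R]_d) :
  P^T = P -> P *m P = P -> P i i = 1 -> (P *m u) i 0 = u i 0.
Proof.
move=> PT PP P1.
have e2 : \sum_k P k i ^+ 2 = P i i.
  have := congr1 (fun M : 'M[R]_d => M i i) PP; rewrite mxE => <-.
  apply: eq_bigr => k _.
  have := congr1 (fun M : 'M[R]_d => M k i) PT; rewrite mxE => <-; ring.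
have z : \sum_(k | k != i) P k i ^+ 2 = 0.
  move: e2; rewrite (bigD1 i) //= P1 expr1n; set X := \sum_(k | _) _.
  move=> e; clear -e; lra.
have zk : forall k, k != i -> P i k = 0.
  move=> k ki; move/eqP: z; rewrite psumr_eq0 => [|l _]; last exact: sqr_ge0.
  move=> /allP /(_ k (mem_index_enum k)); rewrite ki /= sqrf_eq0 => /eqP Pk.
  by have := congr1 (fun M : 'M[R]_d => M i k) PT; rewrite mxE Pk.
rewrite mxE (bigD1 i) //= P1 mul1r big1 ?addr0 // => k ki; by rewrite zk // mul0r.
Qed.
Lemma range_fact (R : realType) (d : nat) (P : 'M[R]_d) (f : 'cV[R]_d -> R)
  (g : 'cV[R]_d -> 'cV[R]_d) (sigma : R) :
  P^T = P -> P *m P = P ->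
  (forall y : 'cV[R]_d, differentiable f y /\
     forall u : 'cV[R]_d, 'd f y u = ((g y)^T *m u) 0 0) ->
  (forall x1 y1 : 'cV[R]_d,
     f x1 - f y1 >= ((g y1)^T *m P *m (x1 - y1)) 0 0
                    + sigma / 2 * sqnormP P (x1 - y1)) ->
  forall y, P *m g y = g y.
Proof.
move=> PT PP Hd SC y.
set u := g y - P *m g y.
have Pu : P *m u = 0 by rewrite /u mulmxBr mulmxA PP subrr.
have ker : forall (z : 'cV[R]_d) (c : R), ((z^T *m P *m (c *: u)) 0 0 = 0) /\
     sqnormP P (c *: u) = 0.
  move=> z c; rewrite /sqnormP -!mulmxA -!scalemxAr Pu !mulmx0 !scaler0 !mxE.
  by split.
have cst : forall h : R, f (y + h *: u) = f y.
  move=> h; have k1 := SC (y + h *: u) y; have k2 := SC y (y + h *: u).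
  move: k1 k2; rewrite addrAC subrr add0r opprD addrA subrr add0r -scaleNr.
  have [a1 a2] := ker (g y) h; have [b1 b2] := ker (g (y + h *: u)) (- h).
  rewrite a1 a2 b1 b2 mulr0 addr0 => k1 k2; lra.
have D0 : 'D_u f y = 0.
  apply/lim_near_cst => //=; near=> h.
  by rewrite /= (addrC (h *: u)) cst subrr scaler0.
have gu : ((g y)^T *m u) 0 0 = 0.
  by have [dy dd] := Hd y; rewrite -dd -deriveE.
have uu : (u^T *m u) 0 0 = 0.
  have e : u^T *m u = u^T *m g y - (P *m u)^T *m g y.
    by rewrite {2}/u mulmxBr trmx_mul PT mulmxA.
  rewrite e Pu trmx0 mul0mx subr0 -[RHS]gu !mxE.
  by apply: eq_bigr => k _; rewrite !mxE mulrC.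
have : \sum_k u k 0 ^+ 2 = 0.
  by rewrite -[RHS]uu mxE; apply: eq_bigr => k _; rewrite expr2 [u^T 0 k]mxE.
move/eqP; rewrite psumr_eq0 => [|k _]; last exact: sqr_ge0.
move=> /allP H; apply/eqP; rewrite eq_sym -subr_eq0; apply/eqP.
apply/matrixP => k l; rewrite (ord1 l).
have := H k (mem_index_enum k); rewrite sqrf_eq0 => /eqP Hk.
move: Hk; rewrite /u !mxE; apply.
Unshelve. all: by end_near.
Qed.
Lemma eps_le0 (R : realType) (X c : R) :
  0 <= c -> (forall n : nat, (0 < n)%N -> X <= c / n%:R) -> X <= 0.
Proof.
move=> c0 H; rewrite leNgt; apply/negP => X0.
set n := (Num.bound (c / X)).+1.
have hb : c / X < n%:R.
  apply: lt_le_trans (archi_boundP _) _; first by apply: divr_ge0 => //; apply: ltW.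
  by rewrite ler_nat.
have n0 : 0 < n%:R :> R by rewrite ltr0n.
have := H n isT; rewrite ler_pdivlMr // => h1.
move: hb; rewrite ltr_pdivrMr // => h2.
nra.
Qed.

Lemma grad_step (R : realType) (d : nat) (P : 'M[R]_d) (f : 'cV[R]_d -> R)
  (g : 'cV[R]_d -> 'cV[R]_d) (sigma : R) :
  P^T = P -> P *m P = P -> 0 <= sigma ->
  (forall x1 y1 : 'cV[R]_d,
     f x1 - f y1 >= ((g y1)^T *m P *m (x1 - y1)) 0 0
                    + sigma / 2 * sqnormP P (x1 - y1)) ->
  (forall y, P *m g y = g y) ->
  forall (a : 'cV[R]_d) (h : R) i,
  f (a + h *: evec R i) - f a <= h * g (a + h *: evec R i) i 0.
Proof.
move=> PT PP s0 SC Pg a h i.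
set b := a + h *: evec R i.
have := SC a b; rewrite sqnormP_sq //.
have -> : (g b)^T *m P = (g b)^T by rewrite -{1}PT -trmx_mul Pg.
have -> : a - b = (- h) *: evec R i by rewrite /b opprD addrA subrr add0r scaleNr.
rewrite -scalemxAr mxE evec_col mxE.
have : 0 <= sigma / 2 * sqP P (- h *: evec R i).
  by apply: mulr_ge0; [apply: divr_ge0 | apply: sqP_ge0].
lra.
Qed.

Lemma smooth_descent (R : realType) (d : nat) (P : 'M[R]_d) (f : 'cV[R]_d -> R)
  (g : 'cV[R]_d -> 'cV[R]_d) (sigma : R) (M : 'I_d -> R) :
  P^T = P -> P *m P = P -> 0 <= sigma ->
  (forall x1 y1 : 'cV[R]_d,
     f x1 - f y1 >= ((g y1)^T *m P *m (x1 - y1)) 0 0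
                    + sigma / 2 * sqnormP P (x1 - y1)) ->
  (forall y, P *m g y = g y) ->
  (forall (i : 'I_d) (y : 'cV[R]_d) (s : R),
     `|(g (y + s *: evec R i)) i 0 - (g y) i 0| <= M i * `|s|) ->
  forall i y s, f (y + s *: evec R i) <= f y + s * g y i 0 + M i * s ^+ 2 / 2.
Proof.
move=> PT PP s0 SC Pg Lip i y s.
have M0 : 0 <= M i.
  have := Lip i y 1; rewrite normr1 mulr1; apply: le_trans; exact: normr_ge0.
have ind : forall h : R, forall n : nat,
    f (y + (n%:R * h) *: evec R i) - f y <= n%:R * h * g y i 0 + M i * h ^+ 2 * (n%:R * (n.+1)%:R / 2).
  move=> h; elim=> [|n IH].
    rewrite !mulr0n !mul0r scale0r addr0 subrr; lra.
  have st := grad_step PT PP s0 SC Pg (y + (n%:R * h) *: evec R i) h i.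
  have e : y + (n%:R * h) *: evec R i + h *: evec R i = y + (n.+1%:R * h) *: evec R i.
    by rewrite -addrA -scalerDl mulrSr mulrDl mul1r.
  rewrite e in st.
  have L := Lip i y (n.+1%:R * h).
  have L2 : h * g (y + (n.+1%:R * h) *: evec R i) i 0 <= h * g y i 0 + M i * h ^+ 2 * n.+1%:R.
    have : h * (g (y + (n.+1%:R * h) *: evec R i) i 0 - g y i 0) <= `|h| * (M i * `|n.+1%:R * h|).
      apply: le_trans (ler_norm _) _; rewrite normrM; apply: ler_wpM2l => //.
    rewrite normrM (ger0_norm (ler0n _ _)) => hh.
    have : `|h| * (M i * (n.+1%:R * `|h|)) = M i * h ^+ 2 * n.+1%:R.
      have hh2 : `|h| * `|h| = h ^+ 2 by rewrite -normrM -expr2 ger0_norm // sqr_ge0.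
      transitivity (M i * n.+1%:R * (`|h| * `|h|)); first ring.
      rewrite hh2; ring.
    lra.
  rewrite !mulrSr in IH st L2 *.
  set N := n%:R in IH st L2 *.
  have -> : M i * h ^+ 2 * ((N + 1) * (N + 1 + 1) / (0 + 1 + 1)) = M i * h ^+ 2 * (N * (N + 1) / (0 + 1 + 1)) + M i * h ^+ 2 * (N + 1).
    by rewrite add0r; field.
  clear -IH st L2; lra.
suff : f (y + s *: evec R i) - (f y + s * g y i 0 + M i * s ^+ 2 / 2) <= 0 by lra.
apply: (@eps_le0 _ _ (M i * s ^+ 2 / 2)).
  by apply: divr_ge0 => //; apply: mulr_ge0 => //; apply: sqr_ge0.
move=> m m0.
have nR : (m%:R : R) != 0 by rewrite pnatr_eq0 -lt0n m0.
have := ind (s / m%:R) m.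
have -> : m%:R * (s / m%:R) = s by rewrite mulrC divfK.
have -> : M i * (s / m%:R) ^+ 2 * (m%:R * m.+1%:R / 2) = M i * s ^+ 2 / 2 + M i * s ^+ 2 / 2 / m%:R.
  rewrite -addn1 natrD; field; exact: nR.
lra.
Qed.
Lemma prox_sub (R : realType) (eta : R) (psi : R -> R) (z v : R) :
  0 < eta -> convex_fun psi -> is_prox eta psi z v ->
  forall u, psi v <= psi u + (u - v) * (v - z) / eta.
Proof.
move=> e0 cv pr u.
suff : psi v - psi u - (u - v) * (v - z) / eta <= 0 by lra.
apply: (@eps_le0 _ _ ((u - v) ^+ 2 / (2 * eta))).
  by apply: divr_ge0; [apply: sqr_ge0 | lra].
move=> n n0.
have nR : 0 < n%:R :> R by rewrite ltr0n.
set l := n%:R^-1.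
have l0 : 0 < l by rewrite /l invr_gt0.
have l1 : l <= 1 by rewrite /l invf_le1 // ler1n.
have c' := cv u v l; rewrite (ltW l0) l1 in c'; have {}c' := c' isT.
have m := pr (l * u + (1 - l) * v).
have e : (l * u + (1 - l) * v - z) ^+ 2 / (2 * eta) - (v - z) ^+ 2 / (2 * eta)
    = l * ((u - v) * (v - z) / eta) + l * (l * ((u - v) ^+ 2 / (2 * eta))).
  by field; lra.
have key : l * psi v <= l * (psi u + (u - v) * (v - z) / eta + l * ((u - v) ^+ 2 / (2 * eta))).
  clear -m c' e; move: m c' e.
  set W := psi (_ + _); set Q0 := (v - z) ^+ 2 / _; set Q1 := (_ - z) ^+ 2 / _.
  set A := (u - v) * _ / _; set B := _ ^+ 2 / _; set pu := psi u; set pv := psi v.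
  clearbody W Q1 Q0 A B pu pv l; move=> *; nra.
have key2 : psi v <= psi u + (u - v) * (v - z) / eta + l * ((u - v) ^+ 2 / (2 * eta)).
  by rewrite -(ler_pM2l l0).
move: key2; rewrite /l; set B := (u - v) ^+ 2 / (2 * eta).
rewrite [_^-1 * B]mulrC => k2; clear -k2; lra.
Qed.

Lemma prox_zero (R : realType) (eta : R) (z v : R) :
  0 < eta -> is_prox eta (fun _ => 0) z v -> v = z.
Proof.
move=> e0 pr; have := pr z; rewrite subrr [0 ^+ 2]expr2 !mul0r !addr0.
move=> h; have : (v - z) ^+ 2 <= 0.
  have : 0 < 2 * eta by lra.
  move=> t; move: h; rewrite ler_pdivrMr // mul0r; lra.
move=> h2; have h3 : (v - z) ^+ 2 = 0 by apply/le_anti; rewrite h2 sqr_ge0.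
by move/eqP: h3; rewrite sqrf_eq0 subr_eq0 => /eqP.
Qed.
Fixpoint Wrec (R : realType) (d : nat) (w0 : 'I_d -> R)
  (st : seq 'I_d -> 'I_d -> R -> R) (n : nat) (h : seq 'I_d) (j : 'I_d) : R :=
  match n with
  | 0 => w0 j
  | n'.+1 => st (take n' h) j (Wrec w0 st n' h j)
  end.

Lemma Wrec_cat (R : realType) (d : nat) (w0 : 'I_d -> R) st n (s1 s2 : seq 'I_d) j :
  (n <= size s1)%N -> Wrec w0 st n (s1 ++ s2) j = Wrec w0 st n s1 j.
Proof.
elim: n => [//|n IH] /= hn.
by rewrite IH ?(ltnW hn) // takel_cat // ltnW.
Qed.

Lemma Wrec_rcons (R : realType) (d : nat) (w0 : 'I_d -> R) st (h : seq 'I_d) i j :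
  Wrec w0 st (size (rcons h i)) (rcons h i) j = st h j (Wrec w0 st (size h) h j).
Proof.
rewrite size_rcons /= -cats1 Wrec_cat // takel_cat // take_size //.
Qed.

Unset Implicit Arguments.

Theorem corollary1 (R : realType) (m d : nat)
  (A : 'M[R]_(m, d)) (Adag : 'M[R]_(d, m))
  (f : 'cV[R]_d -> R) (g : 'cV[R]_d -> 'cV[R]_d) (psi : 'I_d -> R -> R)
  (sigmaA S : R) (M p : 'I_d -> R) (theta : 'cV[R]_d)
  (x v : seq 'I_d -> 'cV[R]_d) :
  is_pinv A Adag ->
  (forall i, convex_fun (psi i)) ->
  (forall y : 'cV[R]_d, differentiable f y /\
     forall u : 'cV[R]_d, 'd f y u = ((g y)^T *m u) 0 0) ->
  (forall x1 y1 : 'cV[R]_d,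
     f x1 - f y1 >= ((g y1)^T *m (Adag *m A) *m (x1 - y1)) 0 0
                    + sigmaA / 2 * sqnormP (Adag *m A) (x1 - y1)) ->
  (forall (i : 'I_d) (y : 'cV[R]_d) (s : R),
     `|(g (y + s *: evec R i)) i 0 - (g y) i 0| <= M i * `|s|) ->
  (forall i, Rdiag (Adag *m A) i = 1 \/ psi i = (fun _ => 0)) ->
  (forall i, 0 < p i) -> \sum_(i < d) p i = 1 ->
  (forall y, Fobj f psi theta <= Fobj f psi y) ->
  0 < sigmaA -> 0 < S ->
  (forall i, M i * Rdiag (Adag *m A) i / p i ^+ 2 <= S ^+ 2) ->
  let rho := Num.sqrt sigmaA / S in
  rho < 1 ->
  let alpha := fun _ : nat => rho in
  let beta := fun _ : nat => rho in
  let As := fun t : nat => (1 - rho) ^- t in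
  let Bs := fun t : nat => sigmaA * As t in
  apcg_iterates alpha beta As Bs p (Adag *m A) g psi x v ->
  (forall (i : 'I_d) (t : nat), 0 <= 1 - alpha t * Rdiag (Adag *m A) i / p i) /\
  (forall t : nat,
     sigmaA * Exp p t (fun h => sqnormP (Adag *m A) (v h - theta))
     + 2 * (Exp p t (fun h => Fobj f psi (x h)) - Fobj f psi theta)
     <= (Bs 0%N * sqnorm (v [::] - theta)
         + 2 * As 0%N * (Fobj f psi (x [::]) - Fobj f psi theta)) * (1 - rho) ^+ t).
Proof.
move=> Hpinv Hcv Hd SC Lip Hor Hp Hps Hmin sig0 S0 HS rho rho1 alpha beta As Bs Hit.
set P := Adag *m A in SC Hor HS Hit *.
case: Hpinv => _ XAX _ PT'.
have PT : P^T = P by exact: PT'.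
have PP : P *m P = P by rewrite /P mulmxA XAX.
case: Hit => Hx0 [Hv0 Hst].
have Pg := range_fact PT PP Hd SC.
have rho0 : 0 < rho by apply: divr_gt0 => //; rewrite sqrtr_gt0.
have rhoS : rho ^+ 2 * S ^+ 2 = sigmaA.
  rewrite /rho expr_div_n sqr_sqrtr ?ltW // divfK //.
  by rewrite expf_neq0 // gt_eqF.
have Pb : forall i, 0 <= P i i <= 1 by move=> i; apply: Pii_bounds.
have p1 : forall i, p i <= 1.
  move=> i; rewrite -Hps (bigD1 i) //= lerDl; apply: sumr_ge0 => j _; exact: ltW.
have SCd : forall (a : 'cV[R]_d) (h : R) i,
    h * g a i 0 + sigmaA / 2 * (h ^+ 2 * P i i) <= f (a + h *: evec R i) - f a.
  move=> a h i; have := SC (a + h *: evec R i) a.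
  rewrite addrAC subrr add0r sqnormP_sq // -(add0r (h *: evec R i)) sqP_step // add0r.
  have -> : (g a)^T *m P = (g a)^T by rewrite -{1}PT -trmx_mul Pg.
  rewrite -scalemxAr mxE evec_col mxE mulmx0 mxE.
  have -> : sqP P 0 = 0 by rewrite /sqP big1 // => k _; rewrite mulmx0 mxE expr2 mulr0.
  by move=> H; apply: le_trans H; rewrite mulr0 !add0r.
have Mge : forall i, sigmaA * P i i <= M i.
  move=> i; have h1 := SCd 0 1 i; have h2 := SCd (0 + 1 *: evec R i) (-1) i.
  move: h2; rewrite -addrA -scalerDl addrN scale0r addr0 => h2.
  have L := Lip i 0 1; rewrite normr1 mulr1 in L.
  have := ler_norm (g (0 + 1 *: evec R i) i 0 - g 0 i 0).
  move: h1 h2 L; set G1 := g (0 + _) i 0; set G0 := g 0 i 0.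
  set F1 := f _; set F0 := f 0; clearbody G1 G0 F1 F0.
  move=> *; nra.
have part1 : forall i, rho * P i i <= p i.
  move=> i.
  have [P0 P1] := andP (Pb i); have pi0 := Hp i.
  have h1 := HS i; rewrite Rdiag_entry ler_pdivrMr ?exprn_gt0 // in h1.
  have h2 := Mge i.
  have h3 : (rho * P i i) ^+ 2 <= p i ^+ 2.
    rewrite exprMn; have : 0 < S ^+ 2 by rewrite exprn_gt0.
    move=> S2; rewrite -(ler_pM2r S2) mulrAC rhoS; nra.
  have q0 : 0 <= rho * P i i by apply: mulr_ge0 => //; exact: ltW.
  move: h3 q0 pi0; set a := rho * P i i; clearbody a; move=> *; nra.
split.
  move=> i t; rewrite /alpha Rdiag_entry subr_ge0 ler_pdivrMr // mul1r; exact: part1.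
move=> t.
pose yv h := (1 - rho * rho)^-1 *: ((1 - rho) *: x h + (rho * (1 - rho)) *: v h).
pose wv h := (1 - rho) *: v h + rho *: yv h.
pose et i := rho / (sigmaA * p i).
have rho1' : 0 < 1 - rho by rewrite subr_gt0.
have Hs : forall h i,
  [/\ is_prox (et i) (psi i) (wv h i 0 - et i * g (yv h) i 0) (v (rcons h i) i 0),
      (forall j, j != i -> v (rcons h i) j 0 = wv h j 0),
      v (rcons h i) = wv h + (v (rcons h i) i 0 - wv h i 0) *: evec R i &
      x (rcons h i) = yv h + (rho * P i i / p i * (v (rcons h i) i 0 - wv h i 0)) *: evec R i].
  move=> h i; case: (Hst h i) => /= Hpr Hot Hxe.
  have Eeta : (As (size h).+1 - As (size h)) / (Bs (size h).+1 * p i) = et i.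
    rewrite /Bs /As /et exprS; set q := (1 - rho) ^+ size h.
    have q0 : q != 0 by rewrite expf_neq0 // gt_eqF.
    have pi0 : p i != 0 by rewrite gt_eqF.
    have s0 : sigmaA != 0 by rewrite gt_eqF.
    have r0 : 1 - rho != 0 by rewrite gt_eqF.
    by clearbody rho q; field; rewrite pi0 s0 q0 r0.
  rewrite /alpha /beta Eeta -/(yv h) -/(wv h) in Hpr Hot Hxe.
  have zE : forall j, (wv h - et i *: coord_grad g i (yv h)) j 0
      = wv h j 0 - et i * ((j == i)%:R * g (yv h) i 0).
    move=> j; rewrite [LHS]mxE [X in _ + X]mxE [X in _ - X]mxE coord_grad_entry //.
  have vE : v (rcons h i) = wv h + (v (rcons h i) i 0 - wv h i 0) *: evec R i.
    apply/matrixP => j k; rewrite (ord1 k) [RHS]mxE [X in _ + X]mxE evec_entry.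
    have [->|ji] := eqVneq j i; first by rewrite mulr1 addrC subrK.
    rewrite mulr0 addr0 Hot //; move: (zE j); rewrite (negbTE ji) mul0r mulr0 subr0; apply.
  split => //.
  - have e := zE i; rewrite eqxx mul1r in e; by rewrite -e.
  - move=> j ji; rewrite Hot //; move: (zE j); rewrite (negbTE ji) mul0r mulr0 subr0; apply.
  - rewrite Hxe Rdiag_entry; congr (_ + _).
    rewrite [X in _ *: (X - _ - _)]vE -addrA -opprD -/(wv h) addrC addKr.
    by rewrite scalerA.
have r2 : 1 - rho * rho != 0.
  have : rho * rho < 1 by nra.
  by move=> h; rewrite gt_eqF // subr_gt0.
have r3 : 1 + rho != 0 by rewrite gt_eqF // addr_gt0.
have ycE : forall h j, yv h j 0 = (x h j 0 + rho * v h j 0) / (1 + rho).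
  move=> h j; rewrite /yv !mxE.
  move: r2 r3; clearbody rho; move=> r2 r3; field.
  by rewrite r3 r2.
have wcE : forall h j, wv h j 0 = (1 - rho) * v h j 0 + rho * yv h j 0.
  by move=> h j; rewrite /wv [LHS]mxE [X in X + _]mxE [X in _ + X]mxE.
pose a j := rho / p j.
pose kv j := rho * (1 - a j ^+ 2) / (1 + rho).
pose cc j := (1 - a j * rho) / (1 + rho).
pose st := fun (h : seq 'I_d) j W => kv j * psi j (v h j 0) + cc j * W.
pose w0 := fun j => (1 - a j) * psi j 0.
pose W h j := Wrec w0 st (size h) h j.
have WR : forall h i j, W (rcons h i) j = kv j * psi j (v h j 0) + cc j * W h j.
  by move=> h i j; rewrite /W Wrec_rcons.
have a0 : forall j, 0 <= a j by move=> j; apply: divr_ge0; apply: ltW.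
have ap : forall j, a j * p j = rho by move=> j; rewrite /a divfK // gt_eqF.
have a1 : forall j, P j j = 1 -> a j <= 1.
  by move=> j Pj; rewrite /a ler_pdivrMr // mul1r -{1}(mulr1 rho) -Pj part1.
have kv0 : forall j, P j j = 1 -> 0 <= kv j.
  move=> j Pj; apply: divr_ge0; last by apply: addr_ge0 => //; apply: ltW.
  apply: mulr_ge0; first exact: ltW.
  have := a1 j Pj; have := a0 j; move: (a j) => b *; nra.
have cc0 : forall j, P j j = 1 -> 0 <= cc j.
  move=> j Pj; apply: divr_ge0; last by apply: addr_ge0 => //; apply: ltW.
  have := a1 j Pj; have := a0 j; move: (a j) => b *; nra.
have cE : forall (b : 'cV[R]_d) (c : R) i j, (b + c *: evec R i) j 0 = b j 0 + c * (j == i)%:R.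
  by move=> b c i j; rewrite [LHS]mxE [X in _ + X]mxE evec_entry.
have id1 : forall j, kv j = (1 - a j) * (1 - cc j).
  by move=> j; rewrite /kv /cc; move: r3; clearbody rho a; move=> r3; field.
have cc1 : forall j, cc j <= 1.
  move=> j; rewrite /cc ler_pdivrMr ?mul1r; last by apply: addr_gt0.
  have := a0 j; clearbody rho a; move=> *; nra.
have Inv : forall h j, P j j = 1 -> exists u, x h j 0 = a j * v h j 0 + (1 - a j) * u
      /\ (1 - a j) * psi j u <= W h j.
  elim/last_ind => [|h i IH] j Pj.
    exists 0; rewrite Hx0 Hv0 !mxE /W /=; split; first ring.
    by rewrite /w0 lexx.
  have [u [xu Wu]] := IH j Pj.
  have [Hpr Hot vE xE] := Hs h i.
  have key : x (rcons h i) j 0 - a j * v (rcons h i) j 0 = yv h j 0 - a j * wv h j 0.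
    rewrite xE cE; have [ji|ji] := eqVneq j i.
      subst j; rewrite Pj /a (_ : true%:R = 1 :> R) // mulr1.
      have pi0 : p i != 0 by rewrite gt_eqF.
      by clearbody rho; field.
    by rewrite (_ : false%:R = 0 :> R) // mulr0 addr0 Hot.
  have key2 : yv h j 0 - a j * wv h j 0 = kv j * v h j 0 + cc j * ((1 - a j) * u).
    by rewrite wcE ycE xu /kv /cc; move: r3; clearbody rho a; move=> r3; field.
  exists (cc j * u + (1 - cc j) * v h j 0); split.
    move: key; rewrite key2 id1 => key; clearbody rho a kv cc; move: key.
    set X := x _ j 0; set V := v _ j 0; move=> key; clear -key; lra.
  rewrite WR.
  have c := Hcv j u (v h j 0) (cc j); rewrite cc0 // cc1 /= in c.
  have c' := c isT.
  have h1 : 0 <= 1 - a j by rewrite subr_ge0 a1.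
  rewrite id1.
  move: (cc0 j Pj) h1 c' Wu; clearbody rho a kv cc; set U := psi j (_ + _).
  set pu := psi j u; set pv := psi j (v h j 0); set Wj := W h j.
  clearbody U pu pv Wj; move=> *; nra.
have W0 : forall h j, psi j = (fun _ => 0) -> W h j = 0.
  move=> h j pj; elim/last_ind: h => [|h i IH]; first by rewrite /W /= /w0 pj mulr0.
  by rewrite WR IH pj /= !mulr0 addr0.
have Fbound : forall h, Fobj f psi (x h) <= f (x h) + \sum_j (a j * psi j (v h j 0) + W h j).
  move=> h; rewrite /Fobj lerD2l; apply: ler_sum => j _.
  case: (Hor j) => [Rj|pj].
    rewrite Rdiag_entry in Rj; have [u [xu Wu]] := Inv h j Rj; rewrite xu.
    have c := Hcv j (v h j 0) u (a j); rewrite a0 a1 //= in c.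
    have c' := c isT; move: c' Wu; clearbody a; set U := psi j (_ + _).
    set pu := psi j u; set pv := psi j (v h j 0); set Wj := W h j.
    clearbody U pu pv Wj; move=> *; lra.
  by rewrite W0 // pj /= mulr0 addr0.
pose H h j := a j * psi j (v h j 0) + W h j.
have Hat : forall h, \sum_i p i * \sum_j H (rcons h i) j
    <= (1 - rho) * \sum_j H h j + rho * \sum_j psi j (v (rcons h j) j 0).
  move=> h.
  have E : forall j, \sum_i p i * H (rcons h i) j
      = a j * (p j * psi j (v (rcons h j) j 0) + (1 - p j) * psi j (wv h j 0))
        + (kv j * psi j (v h j 0) + cc j * W h j).
    move=> j; rewrite /H; under eq_bigr do rewrite WR.
    rewrite (bigD1 j) //=.
    have -> : \sum_(i < d | i != j) p i * (a j * psi j (v (rcons h i) j 0)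
          + (kv j * psi j (v h j 0) + cc j * W h j))
        = \sum_(i < d | i != j) p i * (a j * psi j (wv h j 0)
          + (kv j * psi j (v h j 0) + cc j * W h j)).
      apply: eq_bigr => i ij; have [_ Hot _ _] := Hs h i.
      by rewrite Hot // eq_sym.
    rewrite -big_distrl /=.
    have -> : \sum_(i < d | i != j) p i = 1 - p j.
      move: Hps; rewrite (bigD1 j) //=; set X := \sum_(i | _) _.
      move=> e; clearbody X; clear -e; lra.
    ring.
  under eq_bigr do rewrite big_distrr; rewrite exchange_big /=.
  rewrite !big_distrr -big_split /=; apply: ler_sum => j _; rewrite E.
  rewrite /H.
  case: (Hor j) => [Rj|pj]; last by rewrite W0 // pj /= !mulr0 !addr0 !mulr0.
  rewrite Rdiag_entry in Rj; have [u [xu Wu]] := Inv h j Rj.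
  pose lam := rho * (1 - a j) / (1 + rho).
  have wE : wv h j 0 = lam * u + (1 - lam) * v h j 0.
    rewrite wcE ycE xu /lam; move: r3; clearbody rho a; move=> r3; by field.
  have l0 : 0 <= lam.
    apply: divr_ge0; last by apply: addr_ge0 => //; apply: ltW.
    by apply: mulr_ge0; [apply: ltW | rewrite subr_ge0 a1].
  have l1 : lam <= 1.
    rewrite /lam ler_pdivrMr ?mul1r; last by apply: addr_gt0.
    have := a0 j; clearbody rho a; move=> *; nra.
  have c := Hcv j u (v h j 0) lam; rewrite l0 l1 /= -wE in c; have {}c := c isT.
  have ajp : 0 <= a j - rho by rewrite -(ap j) -{1}(mulr1 (a j)) -mulrBr; apply: mulr_ge0; [apply: a0|rewrite subr_ge0 p1].
  have s1 := ler_wpM2l ajp c.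
  have s2 : (a j - rho) * rho / (1 + rho) * ((1 - a j) * psi j u) <= (a j - rho) * rho / (1 + rho) * W h j.
    by apply: ler_wpM2l => //; apply: divr_ge0; [apply: mulr_ge0 => //; apply: ltW|apply: addr_ge0 => //; apply: ltW].
  have idA : ((a j - rho) * (1 - lam) + kv j) * psi j (v h j 0) = (1 - rho) * a j * psi j (v h j 0).
    by rewrite /lam /kv; move: r3; clearbody rho a; move=> r3; field.
  have idB : ((a j - rho) * rho / (1 + rho) + cc j) * W h j = (1 - rho) * W h j.
    by rewrite /cc; move: r3; clearbody rho a; move=> r3; field.
  have idL : (a j - rho) * (lam * psi j u) = (a j - rho) * rho / (1 + rho) * ((1 - a j) * psi j u).
    by rewrite /lam; move: r3; clearbody rho a; move=> r3; field.
  have idP : a j * (p j * psi j (v (rcons h j) j 0) + (1 - p j) * psi j (wv h j 0))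
      = rho * psi j (v (rcons h j) j 0) + (a j - rho) * psi j (wv h j 0).
    by rewrite -(ap j); ring.
  rewrite idP; move: s1 s2 idA idB idL; clearbody rho a kv cc lam.
  set Q := psi j (v (rcons h j) j 0); set Wv := psi j (wv h j 0).
  set V := psi j (v h j 0); set U := psi j u; set Wj := W h j.
  clearbody Q Wv V U Wj; move=> *; nra.
pose Fs := Fobj f psi theta.
pose Phi h := sigmaA * sqnormP P (v h - theta) + 2 * (f (x h) + \sum_j H h j - Fs).
have Pi0 : forall i, 0 <= P i i by move=> i; case/andP: (Pb i).
have Gi : forall h i,
    p i * (sigmaA * sqnormP P (v (rcons h i) - theta) + 2 * f (x (rcons h i)))
    <= p i * (sigmaA * sqP P (wv h - theta) + 2 * f (yv h))
       + 2 * rho * (psi i (theta i 0) - g (yv h) i 0 * (P *m (wv h - theta)) i 0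
                    - psi i (v (rcons h i) i 0)).
  move=> h i; have [Hpr Hot vE xE] := Hs h i.
  set q := v (rcons h i) i 0; set dl := q - wv h i 0.
  set Q := (P *m (wv h - theta)) i 0; set gi := g (yv h) i 0.
  have sqE : sqnormP P (v (rcons h i) - theta) = sqP P (wv h - theta) + 2 * dl * Q + dl ^+ 2 * P i i.
    by rewrite sqnormP_sq // vE addrAC sqP_step.
  have fx : f (x (rcons h i)) <= f (yv h) + rho * P i i / p i * dl * gi
         + M i * (rho * P i i / p i * dl) ^+ 2 / 2.
    by rewrite xE; apply: (smooth_descent PT PP (ltW sig0) SC Pg Lip).
  have pi0 := Hp i.
  have quad : p i * (M i * (rho * P i i / p i * dl) ^+ 2) <= sigmaA * p i * P i i * dl ^+ 2.
    have h1 := HS i; rewrite Rdiag_entry ler_pdivrMr ?exprn_gt0 // in h1.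
    have e : p i * (M i * (rho * P i i / p i * dl) ^+ 2)
        = (M i * P i i) * (rho ^+ 2 * P i i * dl ^+ 2 / p i).
      by move: pi0; clearbody rho; move=> pi0; field; rewrite gt_eqF.
    have e2 : sigmaA * p i * P i i * dl ^+ 2
        = (S ^+ 2 * p i ^+ 2) * (rho ^+ 2 * P i i * dl ^+ 2 / p i).
      by rewrite -rhoS; move: pi0; clearbody rho; move=> pi0; field; rewrite gt_eqF.
    rewrite e e2; apply: ler_wpM2r => //.
    apply: divr_ge0; last exact: ltW.
    by apply: mulr_ge0; [apply: mulr_ge0 => //; apply: sqr_ge0 | apply: sqr_ge0].
  rewrite sqE.
  have eta0 : 0 < et i by apply: divr_gt0 => //; apply: mulr_gt0.
  have sp : sigmaA * p i * et i = rho.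
    by rewrite /et; move: pi0 sig0; clearbody rho; move=> pi0 s0; field;
       rewrite ?gt_eqF //= mulf_neq0 // gt_eqF.
  case: (Hor i) => [Ri|pz].
    rewrite Rdiag_entry in Ri.
    have QE : Q = wv h i 0 - theta i 0.
      by rewrite /Q Pii_one // [LHS]mxE [X in _ + X]mxE.
    have pr := prox_sub eta0 (Hcv i) Hpr (theta i 0).
    have e : 2 * rho * ((theta i 0 - q) * (q - (wv h i 0 - et i * gi)) / et i)
        = 2 * (theta i 0 - wv h i 0 - dl) * (sigmaA * p i * dl + rho * gi).
      by rewrite -sp /dl; move: eta0; clearbody rho; move=> eta0; field; rewrite gt_eqF.
    have pr2 : 2 * rho * psi i q <= 2 * rho * psi i (theta i 0)
        + 2 * rho * ((theta i 0 - q) * (q - (wv h i 0 - et i * gi)) / et i).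
      by rewrite -mulrDr; apply: ler_wpM2l => //; apply: mulr_ge0 => //; apply: ltW.
    rewrite e in pr2; rewrite Ri in fx quad; rewrite Ri QE.
    have fx2 := ler_wpM2l (ltW (mulr_gt0 (ltr0n _ 2) pi0)) fx.
    have e3 : 2 * p i * (rho * 1 / p i * dl * gi) = 2 * rho * dl * gi.
      by move: pi0; clearbody rho; move=> pi0; field; rewrite gt_eqF.
    have e4 : 2 * p i * (M i * (rho * 1 / p i * dl) ^+ 2 / 2) = p i * (M i * (rho * 1 / p i * dl) ^+ 2).
      by field; rewrite gt_eqF.
    move: pr2 fx2 quad e3 e4; rewrite /dl; clearbody rho q.
    set F1 := f _; set F0 := f (yv h); set Sq := sqP _ _; set T := psi i (theta i 0).
    set K1 := M i * _; set ps := psi i q; set W0' := wv h i 0.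
    clearbody F1 F0 Sq T K1 ps W0'; move=> *; nra.
  rewrite pz in Hpr; have qz := prox_zero eta0 Hpr.
  have key : sigmaA * p i * dl = - (rho * gi).
    by rewrite /dl /q qz -sp /gi; ring.
  have k1 : sigmaA * p i * dl * Q = - (rho * gi * Q) by rewrite key; ring.
  have k2 : sigmaA * p i * P i i * dl ^+ 2 = - (rho * P i i * dl * gi).
    have -> : sigmaA * p i * P i i * dl ^+ 2 = (sigmaA * p i * dl) * (P i i * dl) by ring.
    by rewrite key; ring.
  have fx2 := ler_wpM2l (ltW (mulr_gt0 (ltr0n _ 2) pi0)) fx.
  have e3 : 2 * p i * (rho * P i i / p i * dl * gi) = 2 * rho * P i i * dl * gi.
    by move: pi0; clearbody rho; move=> pi0; field; rewrite gt_eqF.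
  have e4 : 2 * p i * (M i * (rho * P i i / p i * dl) ^+ 2 / 2) = p i * (M i * (rho * P i i / p i * dl) ^+ 2).
    by field; rewrite gt_eqF.
  rewrite pz /=.
  move: fx2 quad e3 e4 k1 k2; clearbody rho q dl.
  set F1 := f _; set F0 := f (yv h); set Sq := sqP _ _.
  set K1 := M i * _; set Pii := P i i.
  clearbody F1 F0 Sq K1 Pii; move=> *; nra.
have Step : forall h, \sum_i p i * Phi (rcons h i) <= (1 - rho) * Phi h.
  move=> h.
  set K1 := sigmaA * sqP P (wv h - theta) + 2 * f (yv h).
  have per : forall i, p i * Phi (rcons h i) <= p i * (K1 - 2 * Fs)
      + 2 * rho * (psi i (theta i 0) - g (yv h) i 0 * (P *m (wv h - theta)) i 0
                   - psi i (v (rcons h i) i 0))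
      + 2 * (p i * \sum_j H (rcons h i) j).
    move=> i; move: (Gi h i); rewrite /Phi /K1; clear -rho0.
    set A1 := sqnormP _ _; set A2 := f (x _); set A3 := \sum_j _; set A4 := sqP _ _.
    set A5 := f (yv h); set A6 := psi i _; set A7 := g _ i 0 * _; set A8 := psi i (v _ i 0).
    clearbody A1 A2 A3 A4 A5 A6 A7 A8 Fs; move=> *; lra.
  apply: le_trans (ler_sum _ (fun i _ => per i)) _.
  rewrite !big_split /= -!big_distrl -!big_distrr /= Hps mul1r !sumrB -Lform.
  have hat := Hat h.
  have sc1 := SC theta (yv h).
  have sc2 := SC (x h) (yv h).
  have Vw : wv h - theta = (1 - rho) *: (v h - theta) + rho *: (yv h - theta).
    by rewrite /wv !scalerBr addrACA -opprD -scalerDl subrK scale1r.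
  have cvx := @sqP_convex _ _ P (v h - theta) (yv h - theta) rho.
  have rr : 0 <= rho <= 1 by rewrite (ltW rho0) (ltW rho1).
  rewrite -Vw in cvx; have {}cvx := cvx rr.
  have sym : sqP P (theta - yv h) = sqP P (yv h - theta).
    by rewrite /sqP; apply: eq_bigr => k _; rewrite -opprB mulmxN mxE sqrrN.
  have V0 : (1 - rho) *: (x h - yv h) + rho *: (theta - yv h) + rho *: (wv h - theta) = 0.
    apply/matrixP => j k; rewrite (ord1 k); move: (ycE h j) (wcE h j).
    clearbody yv wv; move=> e1 e2; rewrite !mxE e2 e1.
    by move: r3; clearbody rho; move=> r3; field.
  have lin := Lin3 ((g (yv h))^T *m P) (x h - yv h) (theta - yv h) (wv h - theta) (1 - rho) rho rho.
  rewrite V0 mulmx0 mxE in lin.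
  rewrite !sqnormP_sq // sym in sc1 sc2 *.
  have sq2 := sqP_ge0 P (x h - yv h).
  have sc1' := ler_wpM2l (ltW rho0) sc1.
  have sc2' := ler_wpM2l (ltW rho1') sc2.
  have cvx' := ler_wpM2l (ltW sig0) cvx.
  have sq2' : 0 <= (1 - rho) * (sigmaA / 2 * sqP P (x h - yv h)).
    by apply: mulr_ge0; [apply: ltW|apply: mulr_ge0 => //; apply: divr_ge0 => //; apply: ltW].
  rewrite /Phi /K1 /Fs /Fobj sqnormP_sq //.
  move: hat sc1' sc2' cvx' lin sq2'; clear -rho0 rho1'.
  set L1 := (_ *m (theta - yv h)) 0 0; set L2 := (_ *m (x h - yv h)) 0 0.
  set L3 := (_ *m (wv h - theta)) 0 0.
  set Q1 := sqP P (v h - theta); set Q2 := sqP P (yv h - theta); set Q3 := sqP P (x h - yv h).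
  set Q4 := sqP P (wv h - theta).
  set T1 := \sum_(i < d) psi i (theta i 0); set T2 := \sum_(i < d) psi i _.
  set T3 := \sum_(i < d) p i * _; set T4 := \sum_j H h j.
  set F1 := f theta; set F2 := f (yv h); set F3 := f (x h).
  clearbody L1 L2 L3 Q1 Q2 Q3 Q4 T1 T2 T3 T4 F1 F2 F3.
  move=> *; lra.
have Exp0 : forall X : seq 'I_d -> R, Exp p 0 X = X [::].
  move=> X; rewrite /Exp (big_pred1 [tuple]); last by move=> hh; apply/esym/eqP/tuple0.
  by rewrite big_nil mul1r.
have ExpInd : forall n h0, Exp p n (fun h => Phi (h0 ++ h)) <= (1 - rho) ^+ n * Phi h0.
  elim=> [|n IH] h0; first by rewrite Exp0 cats0 expr0 mul1r.
  rewrite Exp_cons.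
  have e : forall i, Exp p n (fun h => Phi (h0 ++ i :: h)) = Exp p n (fun h => Phi (rcons h0 i ++ h)).
    by move=> i; apply: Exp_ext => hh; rewrite cat_rcons.
  under eq_bigr do rewrite e.
  apply: le_trans (_ : \sum_i p i * ((1 - rho) ^+ n * Phi (rcons h0 i)) <= _).
    by apply: ler_sum => i _; apply: ler_wpM2l; [apply: ltW | apply: IH].
  under eq_bigr do rewrite mulrCA.
  rewrite -big_distrr /= exprSr -mulrA; apply: ler_wpM2l.
    by apply: exprn_ge0; apply: ltW.
  exact: Step.
have fin := ExpInd t [::].
have lhs : sigmaA * Exp p t (fun h => sqnormP P (v h - theta))
    + 2 * (Exp p t (fun h => Fobj f psi (x h)) - Fobj f psi theta)
    <= Exp p t (fun h => Phi ([::] ++ h)).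
  have e1 : Exp p t (fun h => Phi ([::] ++ h)) >= Exp p t (fun h =>
      1 * (sigmaA * sqnormP P (v h - theta) + 2 * Fobj f psi (x h)) + (- (2 * Fs)) * 1).
    apply: Exp_le => [i|hh]; first exact: ltW.
    rewrite /= /Phi mul1r mulr1; have := Fbound hh; rewrite /H; clear -rho0.
    set A1 := Fobj _ _ _; set A2 := \sum_j _; clearbody A1 A2; move=> *; lra.
  apply: le_trans e1; rewrite Exp_lin Exp_lin Exp_cst // /Fs; lra.
apply: le_trans lhs _; apply: le_trans fin _.
rewrite mulrC; apply: ler_wpM2r; first by apply: exprn_ge0; apply: ltW.
rewrite /Phi /Bs /As expr0 invr1 !mulr1 /= /Fs /Fobj.
have e0 : \sum_j H [::] j = \sum_j psi j (x [::] j 0).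
  apply: eq_bigr => j _; rewrite /H /W /= /w0 Hx0 Hv0 !mxE; ring.
rewrite e0; have := sqnorm_ge_sqnormP (v [::] - theta) PT PP.
have := ltW sig0; clear -rho0.
set A1 := sqnormP _ _; set A2 := sqnorm _; clearbody A1 A2; move=> s0 hA.
have := ler_wpM2l s0 hA; lra.
Qed.
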